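(* Assume $(g,\mathfrak{D})$ satisfy B1–B3 with constant $\kappa>0$. Then for every $X\in\mathbb{R}^{m\times n}$ and every $D\in\mathfrak{D}$, with the norm $\|\cdot\|=\|\cdot\|_{1\to2}$, $$L_X(D)\le\frac{2}{n\sqrt\kappa}\|X\|_F^2,\qquad C_X(D)\le\frac{2}{n\kappa}\|X\|_F^2.$$
   Context: $\mathfrak{D}\subset\mathbb{R}^{m\times d}$. B1: $g=\chi_{\mathcal K}$ is the indicator of a set $\mathcal K\subset\mathbb{R}^d$ ($0$ on $\mathcal K$, $+\infty$ outside); B2: $\kappa\|\alpha\|_1^2\le\|D\alpha\|_2^2$ for all $\alpha\in\mathcal K$, $D\in\mathfrak{D}$; B3: $0\in\mathcal K$. $\mathcal{L}_x(D,\alpha)=\tfrac12\|x-D\alpha\|_2^2+g(\alpha)$, $f_x(D)=\inf_\alpha\mathcal{L}_x(D,\alpha)$. $\|\Delta\|_{1\to2}=\max_j\|\delta_j\|_2$ with dual norm $\|\cdot\|_\star$ w.r.t. the Frobenius inner product. For $X=[x_1,\dots,x_n]$ and $\epsilon>0$, $\mathfrak{A}_\epsilon(X,D)=\{A=[\alpha_1,\dots,\alpha_n]:\ \mathcal{L}_{x_i}(D,\alpha_i)\le f_{x_i}(D)+\epsilon\ \forall i\}$; $L_X(D)=\inf_{\epsilon>0}\sup_{A\in\mathfrak{A}_\epsilon(X,D)}\frac1n\|(X-DA)A^\top\|_\star$, $C_X(D)=\inf_{\epsilon>0}\sup_{A\in\mathfrak{A}_\epsilon(X,D)}\frac1{2n}\sum_i\|\alpha_i\|_1^2$.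 *)

(* Defs.v *)
From Stdlib Require Import Reals Lra Classical ClassicalEpsilon.
Open Scope R_scope.

(* Vectors are functions nat -> R (only indices < dimension matter);
   matrices are functions nat -> nat -> R (row index, column index). *)

Fixpoint fsum (k : nat) (f : nat -> R) : R :=
  match k with O => 0 | S k' => fsum k' f + f k' end.

Fixpoint fmax (k : nat) (f : nat -> R) : R :=
  match k with O => 0 | S k' => Rmax (fmax k' f) (f k') end.

Inductive Ebar := Fin (r : R) | PInf | NInf.

Definition Ele (x y : Ebar) : Prop :=
  match x, y with
  | NInf, _ => True
  | _, PInf => True
  | Fin a, Fin b => a <= b
  | _, _ => False
  end.

Definition Eadd (x y : Ebar) : Ebar :=
  match x, y with
  | Fin a, Fin b => Fin (a + b)
  | PInf, NInf | NInf, PInf => PInf (* not used *)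
  | PInf, _ | _, PInf => PInf
  | NInf, _ | _, NInf => NInf
  end.

(* multiplication by a (positive) real scalar *)
Definition Escale (c : R) (x : Ebar) : Ebar :=
  match x with Fin a => Fin (c * a) | PInf => PInf | NInf => NInf end.

Definition is_lub_E (S : Ebar -> Prop) (x : Ebar) : Prop :=
  (forall y, S y -> Ele y x) /\ (forall z, (forall y, S y -> Ele y z) -> Ele x z).
Definition is_glb_E (S : Ebar -> Prop) (x : Ebar) : Prop :=
  (forall y, S y -> Ele x y) /\ (forall z, (forall y, S y -> Ele z y) -> Ele z x).

Definition Esup (S : Ebar -> Prop) : Ebar := epsilon (inhabits PInf) (is_lub_E S).
Definition Einf (S : Ebar -> Prop) : Ebar := epsilon (inhabits PInf) (is_glb_E S).

Definition sqnorm2 (m : nat) (v : nat -> R) : R := fsum m (fun i => v i ^ 2).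
Definition norm1 (d : nat) (a : nat -> R) : R := fsum d (fun j => Rabs (a j)).
Definition frob2 (m n : nat) (X : nat -> nat -> R) : R :=
  fsum m (fun i => fsum n (fun k => X i k ^ 2)).
Definition col (M : nat -> nat -> R) (k : nat) : nat -> R := fun i => M i k.
Definition matvec (d : nat) (D : nat -> nat -> R) (a : nat -> R) : nat -> R :=
  fun i => fsum d (fun j => D i j * a j).

(* ||Delta||_{1->2} = max_j ||delta_j||_2 for Delta in R^{m x d} *)
Definition norm12 (m d : nat) (Delta : nat -> nat -> R) : R :=
  fmax d (fun j => sqrt (sqnorm2 m (col Delta j))).
Definition frob_inner (m d : nat) (M N : nat -> nat -> R) : R :=
  fsum m (fun i => fsum d (fun j => M i j * N i j)).
Definition dualnorm12 (m d : nat) (M : nat -> nat -> R) : Ebar :=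
  Esup (fun e => exists Delta, norm12 m d Delta <= 1 /\ e = Fin (frob_inner m d M Delta)).

(* g = chi_K, indicator of K *)
Definition chi (K : (nat -> R) -> Prop) (a : nat -> R) : Ebar :=
  if excluded_middle_informative (K a) then Fin 0 else PInf.

Definition Lx (m d : nat) (K : (nat -> R) -> Prop) (x : nat -> R)
    (D : nat -> nat -> R) (a : nat -> R) : Ebar :=
  Eadd (Fin (/2 * sqnorm2 m (fun i => x i - matvec d D a i))) (chi K a).

Definition fx (m d : nat) (K : (nat -> R) -> Prop) (x : nat -> R)
    (D : nat -> nat -> R) : Ebar :=
  Einf (fun e => exists a, e = Lx m d K x D a).

Definition Aeps (m d n : nat) (K : (nat -> R) -> Prop) (eps : R)
    (X D A : nat -> nat -> R) : Prop :=
  forall i, (i < n)%nat ->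
    Ele (Lx m d K (col X i) D (col A i)) (Eadd (fx m d K (col X i) D) (Fin eps)).

Definition residA (d n : nat) (X D A : nat -> nat -> R) : nat -> nat -> R :=
  fun i j => fsum n (fun k => (X i k - fsum d (fun l => D i l * A l k)) * A j k).

Definition LX (m d n : nat) (K : (nat -> R) -> Prop) (X D : nat -> nat -> R) : Ebar :=
  Einf (fun e => exists eps, eps > 0 /\
    e = Esup (fun v => exists A, Aeps m d n K eps X D A /\
                 v = Escale (/ INR n) (dualnorm12 m d (residA d n X D A)))).

Definition CX (m d n : nat) (K : (nat -> R) -> Prop) (X D : nat -> nat -> R) : Ebar :=
  Einf (fun e => exists eps, eps > 0 /\
    e = Esup (fun v => exists A, Aeps m d n K eps X D A /\
                 v = Fin (/ (2 * INR n) * fsum n (fun i => norm1 d (col A i) ^ 2)))).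

(* Main.v *)
Require Import Defs.
From Stdlib Require Import Reals Lra Lia Classical ClassicalEpsilon.
Open Scope R_scope.

Lemma Ele_trans x y z : Ele x y -> Ele y z -> Ele x z.
Proof. destruct x, y, z; simpl; try tauto; lra. Qed.

Lemma lub_ex S : exists x, is_lub_E S x.
Proof.
destruct (classic (S PInf)) as [HP|HP].
- exists PInf; split. intros y _; destruct y; simpl; auto. intros z Hz; apply Hz; exact HP.
- destruct (classic (exists r, S (Fin r))) as [[r0 Hr0]|HF].
  + destruct (classic (bound (fun r => S (Fin r)))) as [Hb|Hb].
    * destruct (completeness _ Hb (ex_intro _ r0 Hr0)) as [M [HM1 HM2]].
      exists (Fin M); split.
      -- intros y Hy; destruct y as [r| |]; simpl; auto; try (apply HM1; exact Hy).
      -- intros z Hz; destruct z as [b| |]; simpl; auto.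
         apply HM2. intros r Hr. exact (Hz _ Hr).
         specialize (Hz _ Hr0); simpl in Hz; contradiction.
    * exists PInf; split. intros y _; destruct y; simpl; auto.
      intros z Hz; destruct z as [b| |]; simpl; auto.
      exfalso; apply Hb; exists b; intros r Hr; exact (Hz _ Hr).
      specialize (Hz _ Hr0); simpl in Hz; contradiction.
  + exists NInf; split.
    intros y Hy; destruct y as [r| |]; simpl; auto. exfalso; apply HF; eauto.
    intros z _; simpl; auto.
Qed.

Lemma glb_ex S : exists x, is_glb_E S x.
Proof.
destruct (classic (S NInf)) as [HN|HN].
- exists NInf; split. intros; simpl; auto. intros z Hz; apply Hz; exact HN.
- destruct (classic (exists r, S (Fin r))) as [[r0 Hr0]|HF].
  + destruct (classic (bound (fun r => S (Fin (-r))))) as [Hb|Hb].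
    * assert (Hw : S (Fin (- - r0))) by (rewrite Ropp_involutive; exact Hr0).
      destruct (completeness _ Hb (ex_intro _ (-r0) Hw)) as [M [HM1 HM2]].
      exists (Fin (-M)); split.
      -- intros y Hy; destruct y as [r| |]; simpl; auto.
         assert (-r <= M) by (apply HM1; rewrite Ropp_involutive; exact Hy). lra.
      -- intros z Hz; destruct z as [b| |]; simpl; auto.
         assert (M <= -b); [|lra].
         apply HM2. intros r Hr. specialize (Hz _ Hr). simpl in Hz. lra.
         specialize (Hz _ Hr0); simpl in Hz; contradiction.
    * exists NInf; split. intros; simpl; auto.
      intros z Hz; destruct z as [b| |]; simpl; auto.
      exfalso; apply Hb; exists (-b); intros r Hr; specialize (Hz _ Hr); simpl in Hz; lra.
      specialize (Hz _ Hr0); simpl in Hz; contradiction.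
  + exists PInf; split.
    intros y Hy; destruct y as [r| |]; simpl; auto. exfalso; apply HF; eauto.
    intros z _; destruct z; simpl; auto.
Qed.

Lemma Esup_spec S : is_lub_E S (Esup S).
Proof. unfold Esup; apply epsilon_spec; apply lub_ex. Qed.
Lemma Einf_spec S : is_glb_E S (Einf S).
Proof. unfold Einf; apply epsilon_spec; apply glb_ex. Qed.

Lemma Esup_le S z : (forall y, S y -> Ele y z) -> Ele (Esup S) z.
Proof. intros H; apply (proj2 (Esup_spec S)); exact H. Qed.

Lemma Einf_bound (G : R -> Ebar) c b : 0 <= b ->
  (forall eps, eps > 0 -> Ele (G eps) (Fin (c + b*eps))) ->
  Ele (Einf (fun e => exists eps, eps > 0 /\ e = G eps)) (Fin c).
Proof.
intros Hb H.
pose proof (Einf_spec (fun e => exists eps, eps > 0 /\ e = G eps)) as [H1 _].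
assert (Hg : forall eps, eps > 0 -> Ele (Einf (fun e => exists eps, eps > 0 /\ e = G eps)) (Fin (c + b*eps))).
{ intros eps He. eapply Ele_trans; [apply H1; exists eps; split; [exact He|reflexivity]|]. apply H; exact He. }
destruct (Einf (fun e => exists eps, eps > 0 /\ e = G eps)) as [x| |].
- simpl. destruct (Rle_dec x c) as [|Hn]; auto.
  set (e := (x - c) / (b + 1)).
  assert (He : e * (b+1) = x - c) by (unfold e; field; lra).
  assert (e > 0) by (unfold e; apply Rdiv_lt_0_compat; lra).
  specialize (Hg e H0); simpl in Hg. nra.
- specialize (Hg 1 ltac:(lra)); simpl in Hg; contradiction.
- simpl; auto.
Qed.

Lemma fsum_ext n f g : (forall k, (k < n)%nat -> f k = g k) -> fsum n f = fsum n g.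
Proof. induction n; simpl; intros H; auto. rewrite IHn, H; auto. Qed.
Lemma fsum_le n f g : (forall k, (k < n)%nat -> f k <= g k) -> fsum n f <= fsum n g.
Proof. induction n; simpl; intros H. lra. assert (f n <= g n) by auto.
  assert (fsum n f <= fsum n g) by auto. lra. Qed.
Lemma fsum_plus n f g : fsum n (fun k => f k + g k) = fsum n f + fsum n g.
Proof. induction n; simpl. lra. rewrite IHn; lra. Qed.
Lemma fsum_scal n c f : fsum n (fun k => c * f k) = c * fsum n f.
Proof. induction n; simpl. lra. rewrite IHn; lra. Qed.
Lemma fsum_const n c : fsum n (fun _ => c) = INR n * c.
Proof. induction n; simpl fsum. simpl; lra. rewrite IHn, S_INR; lra. Qed.
Lemma fsum_swap m n f : fsum m (fun i => fsum n (fun k => f i k)) = fsum n (fun k => fsum m (fun i => f i k)).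
Proof. induction m; simpl. rewrite fsum_const; simpl; lra.
  rewrite IHm, <- fsum_plus; reflexivity. Qed.
Lemma fsum_nonneg n f : (forall k, (k < n)%nat -> 0 <= f k) -> 0 <= fsum n f.
Proof. intros H. rewrite <- (Rmult_0_r (INR n)), <- fsum_const. apply fsum_le; auto. Qed.
Lemma fmax_ge d f j : (j < d)%nat -> f j <= fmax d f.
Proof. induction d; simpl; intros H. lia.
  destruct (Nat.eq_dec j d). subst; apply Rmax_r.
  eapply Rle_trans; [apply IHd; lia | apply Rmax_l]. Qed.

Lemma amgm_aux A C B u : 0 <= A -> 0 <= C -> B^2 <= A*C -> 2*B*u <= A*u^2 + C.
Proof.
intros HA HC HB. destruct (Req_dec A 0) as [->|HA'].
- assert (B = 0) by (apply Rsqr_0_uniq; unfold Rsqr; nra). subst; nra.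
- assert (A * (A*u^2 + C - 2*B*u) = (A*u - B)^2 + (A*C - B^2)) by ring.
  pose proof (pow2_ge_0 (A*u-B)).
  assert (A > 0) by lra.
  assert (0 <= A*u^2 + C - 2*B*u); [|lra].
  apply (Rmult_le_reg_l A); lra.
Qed.

Lemma wcs d a u : (fsum d (fun j => a j * u j))^2 <=
  fsum d (fun j => Rabs (a j)) * fsum d (fun j => Rabs (a j) * u j ^ 2).
Proof.
induction d; cbn [fsum]. simpl; lra.
set (B := fsum d (fun j => a j * u j)) in *.
set (A := fsum d (fun j => Rabs (a j))) in *.
set (C := fsum d (fun j => Rabs (a j) * u j ^ 2)) in *.
assert (HA : 0 <= A) by (apply fsum_nonneg; intros; apply Rabs_pos).
assert (HC : 0 <= C) by (apply fsum_nonneg; intros; pose proof (Rabs_pos (a k)); nra).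
assert (Hk : 2 * B * (a d * u d) <= Rabs (a d) * (A * u d ^2 + C)).
{ destruct (Rle_dec 0 (a d)).
  - rewrite Rabs_right by lra. pose proof (amgm_aux A C B (u d) HA HC IHd). nra.
  - rewrite Rabs_left by lra. pose proof (amgm_aux A C B (- u d) HA HC IHd). nra. }
assert (Ra : Rabs (a d) ^ 2 = a d ^ 2) by (rewrite <- Rsqr_pow2, <- Rsqr_abs, Rsqr_pow2; reflexivity).
replace ((B + a d * u d) ^ 2) with (B^2 + 2 * B * (a d * u d) + Rabs (a d)^2 * u d ^2)
  by (rewrite Ra; ring).
replace ((A + Rabs (a d)) * (C + Rabs (a d) * u d ^ 2)) with
  (A * C + Rabs (a d) * (A * u d ^ 2 + C) + Rabs (a d)^2 * u d ^2) by ring.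
lra.
Qed.

Lemma Escale_le c y t : 0 <= c -> Ele y (Fin t) -> Ele (Escale c y) (Fin (c * t)).
Proof. intros Hc H; destruct y; simpl in *; auto. nra. Qed.

Section Main.
Variables (m d : nat) (K : (nat -> R) -> Prop) (D : nat -> nat -> R).
Hypothesis B3 : K (fun _ => 0).

Lemma col_bound x a eps : eps > 0 ->
  Ele (Lx m d K x D a) (Eadd (fx m d K x D) (Fin eps)) ->
  K a /\ sqnorm2 m (fun i => x i - matvec d D a i) <= sqnorm2 m x + 2*eps.
Proof.
intros He H.
assert (H0 : Ele (fx m d K x D) (Fin (/2 * sqnorm2 m x))).
{ unfold fx. pose proof (Einf_spec (fun e => exists a, e = Lx m d K x D a)) as [H1 _].
  eapply Ele_trans; [apply H1; exists (fun _ => 0); reflexivity|].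
  unfold Lx, chi. destruct (excluded_middle_informative (K (fun _ => 0))); [|contradiction].
  simpl. right. rewrite Rplus_0_r. f_equal. unfold sqnorm2. apply fsum_ext; intros i0 _.
  unfold matvec. rewrite (fsum_ext _ _ (fun _ => 0 * 0)) by (intros; ring).
  rewrite fsum_const; ring. }
remember (fx m d K x D) as F. clear HeqF.
unfold Lx, chi in H. destruct (excluded_middle_informative (K a)).
- destruct F as [f| |]; simpl in H, H0; try contradiction. split; auto. lra.
- destruct F; simpl in H; contradiction.
Qed.

Lemma sq_bound x a : sqnorm2 m (matvec d D a) <=
   2 * sqnorm2 m x + 2 * sqnorm2 m (fun i => x i - matvec d D a i).
Proof.
unfold sqnorm2. rewrite <- !fsum_scal, <- fsum_plus. apply fsum_le; intros k _.
set (y := matvec d D a k).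
assert (2 * x k ^ 2 + 2 * (x k - y) ^ 2 - y^2 = (2*x k - y)^2) by ring.
pose proof (pow2_ge_0 (2*x k - y)). lra.
Qed.

Lemma norm1_bound (Dset : (nat -> nat -> R) -> Prop) kappa x a eps :
  (forall (a : nat -> R) (D : nat -> nat -> R), K a -> Dset D ->
          kappa * (norm1 d a) ^ 2 <= sqnorm2 m (matvec d D a)) ->
  Dset D -> eps > 0 ->
  Ele (Lx m d K x D a) (Eadd (fx m d K x D) (Fin eps)) ->
  kappa * norm1 d a ^ 2 <= 4 * sqnorm2 m x + 4 * eps /\
  sqnorm2 m (fun i => x i - matvec d D a i) <= sqnorm2 m x + 2*eps.
Proof.
intros B2 hD He H. destruct (col_bound x a eps He H) as [Ka Hs]. split; auto.
pose proof (B2 a D Ka hD). pose proof (sq_bound x a). lra.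
Qed.

End Main.

Lemma Delta_bound m d (Delta : nat -> nat -> R) a :
  norm12 m d Delta <= 1 ->
  sqnorm2 m (fun i => fsum d (fun j => Delta i j * a j)) <= norm1 d a ^ 2.
Proof.
intros H.
assert (Hc : forall j, (j < d)%nat -> fsum m (fun i => Delta i j ^ 2) <= 1).
{ intros j Hj. pose proof (fmax_ge d (fun j => sqrt (sqnorm2 m (col Delta j))) j Hj).
  unfold norm12 in H. assert (Hs : sqrt (fsum m (fun i => Delta i j ^ 2)) <= 1).
  { cbv beta in H0. unfold sqnorm2, col in H, H0. lra. }
  assert (Hp : 0 <= fsum m (fun i => Delta i j ^ 2)) by (apply fsum_nonneg; intros; nra).
  rewrite <- (sqrt_sqrt _ Hp). pose proof (sqrt_pos (fsum m (fun i => Delta i j ^ 2))). nra. }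
unfold sqnorm2.
eapply Rle_trans.
{ apply fsum_le; intros i _.
  rewrite (fsum_ext d (fun j => Delta i j * a j) (fun j => a j * Delta i j)) by (intros; ring).
  apply wcs. }
rewrite fsum_scal, fsum_swap.
unfold norm1. set (N := fsum d (fun j => Rabs (a j))).
assert (HN : 0 <= N) by (apply fsum_nonneg; intros; apply Rabs_pos).
assert (fsum d (fun k => fsum m (fun i => Rabs (a k) * Delta i k ^ 2)) <= N).
{ apply fsum_le; intros k Hk. rewrite fsum_scal. pose proof (Hc k Hk). pose proof (Rabs_pos (a k)). nra. }
replace (N ^ 2) with (N * N) by ring. apply Rmult_le_compat_l; auto.
Qed.

Theorem mainTheorem8
  (m d n : nat) (K : (nat -> R) -> Prop) (Dset : (nat -> nat -> R) -> Prop)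
  (kappa : R) (hkappa : kappa > 0)
  (B2 : forall (a : nat -> R) (D : nat -> nat -> R), K a -> Dset D ->
          kappa * (norm1 d a) ^ 2 <= sqnorm2 m (matvec d D a))
  (B3 : K (fun _ => 0))
  (hn : (0 < n)%nat)
  (X D : nat -> nat -> R) (hD : Dset D) :
  Ele (LX m d n K X D) (Fin (2 / (INR n * sqrt kappa) * frob2 m n X)) /\
  Ele (CX m d n K X D) (Fin (2 / (INR n * kappa) * frob2 m n X)).
Proof.
assert (Hn : INR n > 0) by (apply lt_0_INR; exact hn).
assert (Hfrob : frob2 m n X = fsum n (fun k => sqnorm2 m (col X k))).
{ unfold frob2, sqnorm2, col. apply fsum_swap. }
set (s := fun k => sqnorm2 m (col X k)).
assert (Hs : forall k, 0 <= s k) by (intros; apply fsum_nonneg; intros; nra).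
set (c := sqrt kappa).
assert (Hc : c > 0) by (apply sqrt_lt_R0; lra).
assert (Hcc : c * c = kappa) by (apply sqrt_sqrt; lra).
split.
- unfold LX. apply (Einf_bound _ _ (3 / c)). unfold Rdiv; apply Rmult_le_pos; [lra|apply Rlt_le, Rinv_0_lt_compat; lra].
  intros eps He. apply Esup_le. intros y [A [HA ->]].
  assert (Hcol : forall k, (k < n)%nat ->
     kappa * norm1 d (col A k) ^ 2 <= 4 * s k + 4 * eps /\
     sqnorm2 m (fun i => col X k i - matvec d D (col A k) i) <= s k + 2*eps).
  { intros k Hk. apply (norm1_bound m d K D B3 Dset kappa); auto. }
  assert (Hdual : Ele (dualnorm12 m d (residA d n X D A)) (Fin (fsum n (fun k => (2 * s k + 3*eps) / c)))).
  { unfold dualnorm12. apply Esup_le. intros y [Delta [HDel ->]]. simpl.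
    set (r := fun i k => X i k - fsum d (fun l => D i l * A l k)).
    set (v := fun i k => fsum d (fun j => Delta i j * A j k)).
    assert (Eq : frob_inner m d (residA d n X D A) Delta = fsum n (fun k => fsum m (fun i => r i k * v i k))).
    { unfold frob_inner, residA. rewrite <- (fsum_swap m n). apply fsum_ext; intros i _.
      rewrite (fsum_ext d _ (fun j => fsum n (fun k => r i k * A j k * Delta i j))).
      2:{ intros j _. transitivity (Delta i j * fsum n (fun k => r i k * A j k)); [unfold r; ring|].
          rewrite <- fsum_scal. apply fsum_ext; intros; ring. }
      rewrite fsum_swap. apply fsum_ext; intros k _. unfold v. rewrite <- fsum_scal.
      apply fsum_ext; intros; ring. }
    rewrite Eq. apply fsum_le; intros k Hk.
    destruct (Hcol k Hk) as [H1 H2].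
    pose proof (Delta_bound m d Delta (col A k) HDel) as H3.
    eapply Rle_trans.
    { apply (fsum_le m _ (fun i => / c * r i k ^ 2 + c / 4 * v i k ^ 2)). intros i _.
      assert (c * (r i k * v i k) <= c * (/ c * r i k ^ 2 + c / 4 * v i k ^ 2)); [|apply (Rmult_le_reg_l c); lra].
      replace (c * (/ c * r i k ^ 2 + c / 4 * v i k ^ 2)) with (r i k ^2 + c * c / 4 * v i k ^ 2) by (field; lra).
      pose proof (pow2_ge_0 (r i k - c * v i k / 2)).
      assert ((r i k - c * v i k / 2)^2 = r i k ^2 + c * c / 4 * v i k ^ 2 - c * (r i k * v i k)) by field.
      lra. }
    rewrite fsum_plus, !fsum_scal.
    change (fsum m (fun i => r i k ^ 2)) with (sqnorm2 m (fun i => col X k i - matvec d D (col A k) i)).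
    change (fsum m (fun i => v i k ^ 2)) with (sqnorm2 m (fun i => fsum d (fun j => Delta i j * col A k j))).
    set (R2 := sqnorm2 m (fun i => col X k i - matvec d D (col A k) i)) in *.
    set (V := sqnorm2 m (fun i => fsum d (fun j => Delta i j * col A k j))) in *.
    set (N := norm1 d (col A k)) in *.
    assert (c * (/ c * R2 + c / 4 * V) <= c * ((2 * s k + 3 * eps) / c)); [|nra].
    replace (c * (/ c * R2 + c / 4 * V)) with (R2 + c * c / 4 * V) by (field; lra).
    replace (c * ((2 * s k + 3 * eps) / c)) with (2 * s k + 3 * eps) by (field; lra).
    rewrite Hcc. nra. }
  eapply Ele_trans. apply Escale_le. apply Rlt_le, Rinv_0_lt_compat; lra. exact Hdual.
  simpl. right.
  rewrite (fsum_ext n _ (fun k => (2/c) * s k + 3 * eps / c)) by (intros; field; lra).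
  rewrite fsum_plus, fsum_scal, fsum_const, Hfrob. fold c. fold s. field. lra.
- unfold CX. apply (Einf_bound _ _ (2 / kappa)). unfold Rdiv; apply Rmult_le_pos; [lra|apply Rlt_le, Rinv_0_lt_compat; lra].
  intros eps He. apply Esup_le. intros y [A [HA ->]]. cbv beta iota delta [Ele].
  assert (Hle : fsum n (fun i => norm1 d (col A i) ^ 2) <= fsum n (fun k => (4 * s k + 4 * eps) / kappa)).
  { apply fsum_le; intros k Hk.
    destruct (norm1_bound m d K D B3 Dset kappa (col X k) (col A k) eps B2 hD He (HA k Hk)) as [H1 _].
    apply (Rmult_le_reg_l kappa); auto.
    replace (kappa * ((4 * s k + 4 * eps) / kappa)) with (4 * s k + 4 * eps) by (field; lra).
    unfold s; lra. }
  rewrite (fsum_ext n (fun k => (4 * s k + 4 * eps) / kappa) (fun k => (4/kappa) * s k + 4 * eps / kappa)) in Hle by (intros; field; lra).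
  rewrite fsum_plus, fsum_scal, fsum_const in Hle.
  rewrite Hfrob. fold s.
  apply (Rmult_le_reg_l (2 * INR n)). lra.
  replace (2 * INR n * (/ (2 * INR n) * fsum n (fun i => norm1 d (col A i) ^ 2)))
    with (fsum n (fun i => norm1 d (col A i) ^ 2)) by (field; lra).
  replace (2 * INR n * (2 / (INR n * kappa) * fsum n s + 2 / kappa * eps))
    with (4 / kappa * fsum n s + INR n * (4 * eps / kappa)) by (field; lra).
  lra.
Qed.
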